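(* Let $\delta>0$, let $X$ be a geodesic $\delta$--hyperbolic space, and let the group $G$ act $(\kappa_0,N_0)$--acylindrically on $X$ with $\kappa_0\geqslant\delta$; put $\rho_0:=\delta/N_0$ and $c:=\frac{1}{10^6}\cdot\frac{\rho_0}{\kappa_0}$. Let $U\subset G$ be finite, let $x_0\in X$ be a point with $\frac1{|U|}\sum_{u\in U}|ux_0-x_0|\leqslant E(U)+\delta$, and let $U_1:=\{u\in U\mid |ux_0-x_0|\leqslant\kappa_0\}$. Then for all $v\in G$ with $|vx_0-x_0|\geqslant10^4\kappa_0$, $$|U_1vU_1|\geqslant c^2|U_1|^2.$$
   Context: Distance $|x-y|$; Gromov product $(p,q)_x=\frac12(|p-x|+|q-x|-|p-q|)$; $X$ is $\delta$--hyperbolic if $(p,r)_x\geqslant\min\{(p,q)_x,(q,r)_x\}-\delta$ for all $p,q,r,x$. The action is $(\kappa_0,N_0)$--acylindrical ($N_0\geqslant1$) if for all $x,y$ with $|x-y|\geqslant\kappa_0$ at most $N_0$ elements $g\in G$ satisfy $|gx-x|\leqslant100\delta$ and $|gy-y|\leqslant100\delta$. $E(U):=\inf_{x\in X}\frac1{|U|}\sum_{u\in U}|ux-x|$. $U_1vU_1:=\{uvw\mid u,w\in U_1\}$. *)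

(* Defs.v *)
From HB Require Import structures.
From mathcomp Require Import all_boot all_order all_algebra.
From mathcomp Require Import finmap.
From mathcomp Require Import classical_sets reals.
Set Implicit Arguments. Unset Strict Implicit. Unset Printing Implicit Defensive.
Import Order.TTheory GRing.Theory Num.Theory.
Local Open Scope fset_scope.
Local Open Scope ring_scope.

Section Defs.
Variable R : realType.

Definition is_metric (X : Type) (d : X -> X -> R) : Prop :=
  [/\ forall x y, 0 <= d x y,
      forall x y, d x y = 0 <-> x = y,
      forall x y, d x y = d y x &
      forall x y z, d x z <= d x y + d y z].

Definition geodesic_space (X : Type) (d : X -> X -> R) : Prop :=
  forall x y : X, exists gam : R -> X,
    [/\ gam 0 = x, gam (d x y) = y &
        forall s t, 0 <= s <= d x y -> 0 <= t <= d x y ->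
          d (gam s) (gam t) = `|s - t|].

Definition gromov (X : Type) (d : X -> X -> R) (p q x : X) : R :=
  (d p x + d q x - d p q) / 2.

Definition hyperbolic (X : Type) (d : X -> X -> R) (delta : R) : Prop :=
  forall p q r x : X,
    Num.min (gromov d p q x) (gromov d q r x) - delta <= gromov d p r x.

Definition isometric_action (G : groupType) (X : Type) (d : X -> X -> R)
  (act : G -> X -> X) : Prop :=
  [/\ forall x, act 1%g x = x,
      forall g h x, act (g * h)%g x = act g (act h x) &
      forall g x y, d (act g x) (act g y) = d x y].

Definition acylindrical (G : groupType) (X : Type) (d : X -> X -> R)
  (act : G -> X -> X) (delta kappa0 : R) (N0 : nat) : Prop :=
  forall x y : X, kappa0 <= d x y ->
    forall S : {fset G},
      (forall g, g \in S ->
         d (act g x) x <= 100 * delta /\ d (act g y) y <= 100 * delta) ->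
      (#|` S| <= N0)%N.

Definition avg_disp (G : groupType) (X : Type) (d : X -> X -> R)
  (act : G -> X -> X) (U : {fset G}) (x : X) : R :=
  (\sum_(u <- U) d (act u x) x) / #|` U|%:R.

Definition energy (G : groupType) (X : Type) (d : X -> X -> R)
  (act : G -> X -> X) (U : {fset G}) : R :=
  inf (range (avg_disp d act U)).

Definition double_coset_prod (G : groupType) (U1 : {fset G}) (v : G) : {fset G} :=
  [fset (u * v * w)%g | u in U1, w in U1].

End Defs.

(* Main.v *)
Require Import Defs.
Set Warnings "-all".
From HB Require Import structures.
From mathcomp Require Import all_boot all_order all_algebra.
From mathcomp Require Import finmap.
From mathcomp Require Import classical_sets reals.
From mathcomp Require Import ring lra.
Import Order.TTheory GRing.Theory Num.Theory.
Local Open Scope fset_scope.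
Local Open Scope ring_scope.
From mathcomp Require Import ring lra.

Lemma inSep (T : choiceType) (S : {fset T}) (P : pred T) x :
  (x \in [fset y in S | P y]) = (x \in S) && P x.
Proof. by rewrite !inE. Qed.

Lemma bucket (T : choiceType) (S : {fset T}) (f : T -> nat) (n N : nat) :
  (forall h, h \in S -> (f h < n)%N) ->
  (forall i, (#|` [fset h in S | f h == i]| <= N)%N) -> (#|` S| <= n * N)%N.
Proof.
move=> hf hN.
have key : forall m, (#|` [fset h in S | (f h < m)%N]| <= m * N)%N.
  elim=> [|m IH].
    rewrite mul0n leqn0 cardfs_eq0; apply/eqP/fsetP => x.
    by rewrite inSep in_fset0 ltn0 andbF.
  apply: (leq_trans (fsubset_leq_card (_ : _ `<=`
     [fset h in S | (f h < m)%N] `|` [fset h in S | f h == m]))).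
    apply/fsubsetP => x; rewrite inSep in_fsetU !inSep ltnS leq_eqVlt.
    by case/andP => -> /orP [->|->]; rewrite ?orbT.
  rewrite cardfsU mulSn addnC.
  apply: (leq_trans (leq_subr _ _)); exact: leq_add.
apply: leq_trans (key n); apply: fsubset_leq_card; apply/fsubsetP => x hx.
by rewrite inSep hx hf.
Qed.

Lemma card_sep (T : choiceType) (S : {fset T}) (P : pred T) :
  #|` [fset x in S | P x]| = count P S.
Proof.
have -> : [fset x in S | P x] = [fset x in filter P S].
  by apply/fsetP => x; rewrite inSep !inE mem_filter andbC.
by rewrite card_fseq undup_id ?size_filter // filter_uniq // fset_uniq.
Qed.

Lemma card_sub_count (T : choiceType) (A D : {fset T}) :
  A `<=` D -> #|` A| = count (fun g => g \in A) D.
Proof.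
move=> sAD; rewrite -card_sep; congr (#|` _|); apply/fsetP => x.
rewrite inSep; case hx: (x \in A); rewrite ?andbF ?andbT //.
by rewrite (fsubsetP sAD).
Qed.

Lemma E1 (G : groupType) (u v w : G) : (v^-1 * u^-1 * (u * v * w) = w)%g.
Proof. by rewrite -!mulgA mulKg mulKg. Qed.
Lemma E2 (G : groupType) (u v g : G) : (u * v * (v^-1 * u^-1 * g) = g)%g.
Proof. by rewrite -!mulgA mulVKg mulVKg. Qed.

Lemma inA (G : groupType) (U1 : {fset G}) (u v g : G) :
  (g \in [fset (u * v * w)%g | w in U1]) = ((v^-1 * u^-1 * g)%g \in U1).
Proof.
apply/imfsetP/idP => [[w hw ->]|h].
  by rewrite E1.
by exists (v^-1 * u^-1 * g)%g => //; rewrite E2.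
Qed.

Lemma double_count (G : groupType) (U1 : {fset G}) (v : G) (K : nat) :
 (forall g, (#|` [fset u in U1 | (v^-1 * u^-1 * g)%g \in U1]| <= K)%N) ->
 (#|` U1| * #|` U1| <= #|` double_coset_prod U1 v| * K)%N.
Proof.
move=> hK; set D := double_coset_prod U1 v.
have e1 : forall u, u \in U1 -> #|` U1| = count (fun g => (v^-1 * u^-1 * g)%g \in U1) D.
  move=> u hu.
  have -> : #|` U1| = #|` [fset (u * v * w)%g | w in U1]|.
    by rewrite card_in_imfset //= => w1 w2 _ _; apply: mulgI.
  rewrite (@card_sub_count _ [fset (u * v * w)%g | w in U1] D); last first.
    apply/fsubsetP => g /imfsetP [w hw ->]; apply/imfset2P.
    by exists u => //; exists w.
  by apply: eq_count => g; rewrite inA.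
have -> : (#|` U1| * #|` U1| = \sum_(u <- U1) #|` U1|)%N.
  by rewrite big_const_seq count_predT iter_addn_0.
rewrite big_seq_cond (eq_bigr (fun u => count (fun g => (v^-1 * u^-1 * g)%g \in U1) D)); last first.
  by move=> u /andP [hu _]; rewrite (e1 u hu).
rewrite -big_seq_cond.
under eq_bigr do rewrite -sum1_count big_mkcond /=.
rewrite exchange_big /=.
under eq_bigr do rewrite -big_mkcond sum1_count -card_sep.
apply: (@leq_trans (\sum_(i <- D) K)%N); first by apply: leq_sum => j _; apply: hK.
by rewrite big_const_seq count_predT iter_addn_0 mulnC.
Qed.
Lemma near_geod (R : realType) (X : Type) (d : X -> X -> R) (delta k : R)
  (x y a b z : X) :
  is_metric d -> hyperbolic d delta ->
  d a z + d z b = d a b -> d a x <= k -> d b y <= k ->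
  k + delta < d a z -> k + 2 * delta < d b z ->
  gromov d x y z <= 2 * delta.
Proof.
move=> [d0 dE dS dT] hyp e1 h1 h2 h3 h4.
have H1 := hyp a x b z. have H2 := hyp x y b z.
move: H1 H2; rewrite /gromov.
have := dT a x z; have := dT b y z. have := dS a x; have := dS b y.
have := dS a z; have := dS z b; have := dS b z; have := dS a b.
set A := (d a z + d x z - d a x) / 2.
set B := (d x z + d b z - d x b) / 2.
set C := (d x z + d y z - d x y) / 2.
set D := (d y z + d b z - d y b) / 2.
move=> s1 s2 s3 s4 s5 s6 t1 t2.
have hA : delta < A by rewrite /A; lra.
have hD : 2 * delta < D by rewrite /D; lra.
move=> H1 H2.
have hB : B <= delta.
  have : Num.min A B <= (d a z + d b z - d a b) / 2 + delta by lra.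
  rewrite ge_min => /orP [h|h]; first lra. lra.
have : Num.min C D <= 2 * delta by lra.
rewrite ge_min => /orP [h|h]; first lra. lra.
Qed.

Lemma close_pts (R : realType) (X : Type) (d : X -> X -> R) (delta : R)
  (x y z1 z2 : X) :
  is_metric d -> hyperbolic d delta -> 0 <= delta ->
  gromov d x y z1 <= 2 * delta -> gromov d x y z2 <= 2 * delta ->
  `|d x z1 - d x z2| <= delta -> d z1 z2 <= 7 * delta.
Proof.
move=> [d0 dE dS dT] hyp hd; rewrite /gromov => g1 g2 hab.
have H := hyp z1 y z2 x; move: H; rewrite /gromov.
have := dS x z1; have := dS x z2; have := dS y z1; have := dS y z2;
have := dS x y.
move=> s1 s2 s3 s4 s5 H.
move: hab; rewrite ler_norml => /andP [a1 a2].
set A := (d z1 x + d y x - d z1 y) / 2 in H.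
set B := (d y x + d z2 x - d y z2) / 2 in H.
have : Num.min A B <= (d z1 x + d z2 x - d z1 z2) / 2 + delta by lra.
rewrite ge_min => /orP [h|h]; rewrite /A /B in h; lra.
Qed.

Lemma trunc_close (R : realType) (u v c e : R) : 0 < e -> c <= u -> c <= v ->
  Num.truncn ((u - c) / e) = Num.truncn ((v - c) / e) -> `|u - v| <= e.
Proof.
move=> he hu hv ht.
have ha : 0 <= (u - c) / e by apply: divr_ge0; lra.
have hb : 0 <= (v - c) / e by apply: divr_ge0; lra.
have := truncn_itv ha; have := truncn_itv hb; rewrite ht.
set a := (u - c) / e; set b := (v - c) / e.
set n := Num.truncn b.
move=> /andP [h1 h2] /andP [h3 h4].
have hab : `|a - b| <= 1.
  rewrite ler_norml; apply/andP; split.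
    move: h2 h3; rewrite -natr1; lra.
  move: h4 h1; rewrite -natr1; lra.
have -> : u - v = (a - b) * e by rewrite /a /b; field; lra.
rewrite normrM (gtr0_norm he).
have := ler_wpM2r (ltW he) hab; lra.
Qed.

Lemma act_inv_l (R : realType) (G : groupType) (X : Type) (d : X -> X -> R)
  (act : G -> X -> X) (g : G) (z w : X) :
  isometric_action d act -> d (act g^-1%g z) w = d z (act g w).
Proof.
move=> [a1 a2 a3].
by rewrite -(a3 g) -a2 mulgV a1.
Qed.

Lemma acyl_count (R : realType) (G : groupType) (X : Type) (d : X -> X -> R)
  (act : G -> X -> X) (delta kappa0 : R) (N0 : nat) (x y : X) (S : {fset G}) :
  is_metric d -> geodesic_space d -> 0 < delta -> hyperbolic d delta ->
  isometric_action d act -> acylindrical d act delta kappa0 N0 ->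
  delta <= kappa0 -> 10 ^+ 4 * kappa0 <= d x y ->
  (forall h, h \in S -> d (act h x) x <= 2 * kappa0 /\ d (act h y) y <= 2 * kappa0) ->
  (#|` S| <= (Num.truncn (4 * kappa0 / delta)).+1 *
             ((Num.truncn (4 * kappa0 / delta)).+1 * N0))%N.
Proof.
move=> hm hgeo hd hyp hiso hacyl hdk hxy hS.
have hm' := hm; case: hm' => [d0 dE dS dT].
have hiso' := hiso; case: hiso' => [a1 a2 a3].
set M := (Num.truncn (4 * kappa0 / delta)).+1.
have [gam [g0 gL giso]] := hgeo x y.
set L := d x y in gL giso hxy.
have hk0 : 0 < kappa0 by lra.
set s := 10 * kappa0; set t := 11 * kappa0.
set p := gam s; set q := gam t.
have hL : (100 <= 10 ^+ 4 :> R) by rewrite -natrX ler_nat.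
have {hL}hxy : 100 * kappa0 <= L.
  by apply: le_trans hxy; apply: ler_wpM2r => //; lra.
have gd : forall a b, 0 <= a -> a <= b -> b <= L -> d (gam a) (gam b) = b - a.
  move=> a b ha hab hb; rewrite giso; last (apply/andP; split; lra).
    by rewrite distrC ger0_norm; lra.
  by apply/andP; split; lra.
have dxp : d x p = s by rewrite -[in LHS]g0 gd /s; lra.
have dpy : d p y = L - s by rewrite -[in LHS]gL gd /s; lra.
have dxq : d x q = t by rewrite -[in LHS]g0 gd /t; lra.
have dqy : d q y = L - t by rewrite -[in LHS]gL gd /t; lra.
have dpq : d p q = kappa0 by rewrite gd /s /t; lra.
have nearP : forall h, h \in S -> forall (z : X) (r : R), d x z = r -> d z y = L - r ->
   10 * kappa0 <= r <= 11 * kappa0 ->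
   gromov d x y (act h z) <= 2 * delta /\
   r - 2 * kappa0 <= d x (act h z) <= r + 2 * kappa0.
  move=> h hh z r hxz hzy /andP [r1 r2].
  have [hx hy] := hS h hh.
  split.
    apply: (@near_geod R X d delta (2 * kappa0) x y (act h x) (act h y) (act h z) hm hyp).
    - by rewrite !a3 hxz hzy -/L; ring.
    - exact: hx.
    - exact: hy.
    - by rewrite a3 hxz; lra.
    - by rewrite a3 (dS y) hzy; lra.
  have := dT x (act h x) (act h z); have := dT (act h x) x (act h z).
  have := dS x (act h x); rewrite a3 hxz => e1 t1 t2; apply/andP; split; lra.
set al := fun h => Num.truncn ((d x (act h p) - (s - 2 * kappa0)) / delta).
set be := fun h => Num.truncn ((d x (act h q) - (t - 2 * kappa0)) / delta).
have rng : forall (e r : R), r - 2 * kappa0 <= e <= r + 2 * kappa0 ->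
    (Num.truncn ((e - (r - 2 * kappa0)) / delta) < M)%N.
  move=> e r /andP [e1 e2]; rewrite /M ltnS; apply: le_truncn.
  apply: ler_wpM2r; [by rewrite invr_ge0; lra | lra].
have close : forall h1 h2, h1 \in S -> h2 \in S -> al h1 = al h2 -> be h1 = be h2 ->
    d (act h1 p) (act h2 p) <= 100 * delta /\ d (act h1 q) (act h2 q) <= 100 * delta.
  move=> h1 h2 i1 i2 e1 e2.
  have [P1 P1'] := nearP h1 i1 p s dxp dpy (ltac:(rewrite /s; apply/andP; split; lra)).
  have [P2 P2'] := nearP h2 i2 p s dxp dpy (ltac:(rewrite /s; apply/andP; split; lra)).
  have [Q1 Q1'] := nearP h1 i1 q t dxq dqy (ltac:(rewrite /t; apply/andP; split; lra)).
  have [Q2 Q2'] := nearP h2 i2 q t dxq dqy (ltac:(rewrite /t; apply/andP; split; lra)).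
  move: P1' P2' Q1' Q2' => /andP [u1 _] /andP [u2 _] /andP [u3 _] /andP [u4 _].
  split.
    have := @close_pts _ _ d delta x y _ _ hm hyp (ltW hd) P1 P2 (@trunc_close _ _ _ _ _ hd u1 u2 e1); lra.
  have := @close_pts _ _ d delta x y _ _ hm hyp (ltW hd) Q1 Q2 (@trunc_close _ _ _ _ _ hd u3 u4 e2); lra.
apply: (@bucket _ S al).
  move=> h hh; apply: rng.
  by case: (nearP h hh p s dxp dpy (ltac:(rewrite /s; apply/andP; split; lra))).
move=> i; apply: (@bucket _ _ be).
  move=> h; rewrite inSep => /andP [hh _]; apply: rng.
  by case: (nearP h hh q t dxq dqy (ltac:(rewrite /t; apply/andP; split; lra))).
move=> j; set B := [fset h in _ | be h == j].
have [->|/fset0Pn [h1 hh1]] := eqVneq B fset0; first by rewrite cardfs0.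
have hB : forall h, h \in B -> [/\ h \in S, al h = i & be h = j].
  by move=> h; rewrite inSep inSep => /andP [/andP [-> /eqP ->] /eqP ->].
have [i1 e1 f1] := hB h1 hh1.
have -> : #|` B| = #|` [fset (h1^-1 * h)%g | h in B]|.
  by rewrite [in RHS]card_in_imfset //= => w1 w2 _ _; apply: mulgI.
apply: (hacyl p q); first by rewrite dpq.
move=> g /imfsetP [h hh ->].
have [i2 e2 f2] := hB h hh.
rewrite !a2 !act_inv_l // !(dS (act h _)).
have [c1 c2] := close h1 h i1 i2 (etrans e1 (esym e2)) (etrans f1 (esym f2)).
by rewrite !(dS (act h1 _)) in c1 c2 *; split.
Qed.

Lemma E3 (G : groupType) (u0 u v g : G) : (u0^-1 * u * v = v * (v^-1 * u0^-1 * g) * (v^-1 * u^-1 * g)^-1)%g.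
Proof. by rewrite !invgM !invgK !mulgA mulgV mul1g mulgK. Qed.

Lemma disp_inv (R : realType) (G : groupType) (X : Type) (d : X -> X -> R)
  (act : G -> X -> X) (g : G) (z : X) :
  is_metric d -> isometric_action d act -> d (act g^-1%g z) z = d (act g z) z.
Proof.
move=> [_ _ dS _] hiso; rewrite act_inv_l //; exact: dS.
Qed.

Theorem lemma5p1 (R : realType) (G : groupType) (X : Type) (d : X -> X -> R)
  (act : G -> X -> X) (delta kappa0 : R) (N0 : nat) :
  is_metric d -> geodesic_space d -> 0 < delta -> hyperbolic d delta ->
  isometric_action d act -> (1 <= N0)%N -> acylindrical d act delta kappa0 N0 ->
  delta <= kappa0 ->
  let rho0 := delta / N0%:R in
  let c := 1 / 10 ^+ 6 * (rho0 / kappa0) in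
  forall (U : {fset G}) (x0 : X),
    avg_disp d act U x0 <= energy d act U + delta ->
    let U1 := [fset u in U | d (act u x0) x0 <= kappa0] in
    forall v : G, 10 ^+ 4 * kappa0 <= d (act v x0) x0 ->
      c ^+ 2 * (#|` U1|%:R) ^+ 2 <= (#|` double_coset_prod U1 v|%:R : R).
Proof.
move=> hm hgeo hd hyp hiso hN0 hacyl hdk rho0 c U x0 _ U1 v hv.
have hm' := hm; case: hm' => [d0 dE dS dT].
have hiso' := hiso; case: hiso' => [a1 a2 a3].
set M := (Num.truncn (4 * kappa0 / delta)).+1.
set K := (M * (M * N0))%N.
have hU1 : forall u, u \in U1 -> d (act u x0) x0 <= kappa0.
  by move=> u; rewrite inSep => /andP [_ ->].
have key : (#|` U1| * #|` U1| <= #|` double_coset_prod U1 v| * K)%N.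
  apply: double_count => g.
  set T := [fset u in U1 | _].
  have [->|/fset0Pn [u0 hu0]] := eqVneq T fset0; first by rewrite cardfs0.
  have hT : forall u, u \in T -> u \in U1 /\ (v^-1 * u^-1 * g)%g \in U1.
    by move=> u; rewrite inSep => /andP [-> ->].
  have -> : #|` T| = #|` [fset (u0^-1 * u)%g | u in T]|.
    by rewrite [in RHS]card_in_imfset //= => w1 w2 _ _; apply: mulgI.
  apply: (@acyl_count R G X d act delta kappa0 N0 x0 (act v x0)) => //.
    by rewrite dS.
  move=> h /imfsetP [u hu ->].
  have [hu1 hw] := hT u hu; have [hu01 hw0] := hT u0 hu0.
  split.
    rewrite a2 act_inv_l //.
    have := dT (act u x0) x0 (act u0 x0); have := hU1 u hu1; have := hU1 u0 hu01.
    have := dS x0 (act u0 x0); lra.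
  have gen : forall a b : G, act (v * a * b^-1)%g x0 = act v (act a (act b^-1%g x0)).
    by move=> a b; rewrite !a2.
  rewrite -a2 (E3 _ u0 u v g) gen a3.
  set w0 := (v^-1 * u0^-1 * g)%g in hw0 *; set w := (v^-1 * u^-1 * g)%g in hw *.
  rewrite -{1}(invgK w0) act_inv_l //.
  have := dT (act w^-1%g x0) x0 (act w0^-1%g x0).
  have := @disp_inv _ _ _ d act w x0 hm hiso; have := @disp_inv _ _ _ d act w0 x0 hm hiso.
  have := hU1 w hw; have := hU1 w0 hw0; have := dS x0 (act w0^-1%g x0).
  lra.
have hn : 1 <= N0%:R :> R by rewrite ler1n.
have hk0 : 0 < kappa0 by lra.
have hT : 10 <= 10 ^+ 6 :> R.
  rewrite exprS -[X in X <= _]mulr1. rewrite ler_pM2l //; apply: exprn_ege1; lra.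
have cdef : c * N0%:R * kappa0 * 10 ^+ 6 = delta.
  by rewrite /c /rho0; field; apply/andP; split; apply/eqP; lra.
have c0 : 0 <= c.
  rewrite /c /rho0; apply: mulr_ge0; first by apply: divr_ge0; lra.
  by apply: divr_ge0; [apply: divr_ge0; lra | lra].
have hmd : M%:R * delta <= 5 * kappa0.
  have h4 : 0 <= 4 * kappa0 / delta by apply: divr_ge0; lra.
  have := truncn_le (4 * kappa0 / delta); rewrite h4 => ht.
  have e4 : (4 * kappa0 / delta + 1) * delta = 4 * kappa0 + delta.
    by field; apply/eqP; lra.
  have : M%:R <= 4 * kappa0 / delta + 1 by rewrite /M -addn1 natrD; lra.
  move=> /(ler_wpM2r (ltW hd)); rewrite e4; lra.
have m0 : 0 <= M%:R :> R by [].
set m := M%:R in hmd m0; set n := N0%:R in hn cdef; set T := 10 ^+ 6 in hT cdef.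
have cK : c ^+ 2 * K%:R <= 1.
  rewrite /K !natrM -/m -/n.
  set e := c * m.
  have e0 : 0 <= e by apply: mulr_ge0.
  have y1 : e * n * kappa0 * T <= 5 * kappa0.
    have -> : e * n * kappa0 * T = m * delta by rewrite -cdef /e; ring.
    exact: hmd.
  have y2 : e * n * T <= 5 by nra.
  have y3 : e * n <= 1 / 2 by nra.
  have y4 : e <= e * n by nra.
  have -> : c ^+ 2 * (m * (m * n)) = e * (e * n) by rewrite /e; ring.
  nra.
have keyR : (#|` U1|%:R) ^+ 2 <= (#|` double_coset_prod U1 v|%:R : R) * K%:R.
  by rewrite expr2 -!natrM ler_nat.
have c2 : 0 <= c ^+ 2 by apply: exprn_ge0.
have K0 : 0 <= K%:R :> R by [].
have D0 : 0 <= (#|` double_coset_prod U1 v|%:R : R) by [].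
nra.
Qed.
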